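(* For every real $\omega>0$, $$\zeta(3)=-2\omega^2\sum_{m=1}^\infty\left(\frac{\pi^2m^2}{\omega^2}\log\Big(1+\frac{\omega^2}{\pi^2m^2}\Big)-1\right)+2\omega\,\mathrm{Li}_2(e^{-2\omega})+\mathrm{Li}_3(e^{-2\omega})-2\omega^2\log(e^{2\omega}-1)+\frac{(10\omega+3)\,\omega^2}{3}.$$
   Context: $\zeta$ is the Riemann zeta function and $\mathrm{Li}_k(z)=\sum_{n\ge1}z^n/n^k$ ($|z|\le1$) is the polylogarithm. *)

(* Defs.v *)
From Stdlib Require Import Reals.
From Coquelicot Require Import Coquelicot.
Open Scope R_scope.

(* Riemann zeta at 3: zeta(3) = sum_{n>=1} 1/n^3 (index shifted: n = k+1). *)
Definition zeta3 : R := Series (fun k : nat => / (INR (k + 1)) ^ 3).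

Definition Li (s : nat) (z : R) : R :=
  Series (fun k : nat => z ^ (k + 1) / (INR (k + 1)) ^ s).

(* The m-th term (m >= 1, written m = k+1) of the series in the theorem. *)
Definition term18 (w : R) (k : nat) : R :=
  let m := INR (k + 1) in
  (PI ^ 2 * m ^ 2 / w ^ 2) * ln (1 + w ^ 2 / (PI ^ 2 * m ^ 2)) - 1.

(* Main.v *)
Require Import Defs.
From Stdlib Require Import Reals.
From Coquelicot Require Import Coquelicot.
From Stdlib Require Import Lra Lia Factorial.
Open Scope R_scope.

Lemma INR_Sk_pos (k : nat) : 0 < INR (k + 1).
Proof. rewrite plus_INR; simpl; pose proof (pos_INR k); lra. Qed.

Lemma tele_sum (N : nat) :
  sum_n (fun k => / INR (k + 1) - / INR (k + 2)) N = 1 - / INR (N + 2).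
Proof.
  induction N as [|N IH].
  - rewrite sum_O. simpl. field.
  - rewrite sum_Sn, IH. unfold plus; cbn -[INR].
    replace (S (N + 1))%nat with (N + 2)%nat by lia.
    ring.
Qed.

Lemma is_series_tele : is_series (fun k => / INR (k + 1) - / INR (k + 2)) 1.
Proof.
  apply (proj1 (is_series_Reals _ _)) || idtac.
  unfold is_series. change (is_lim_seq (sum_n (fun k => / INR (k + 1) - / INR (k + 2))) 1).
  apply (is_lim_seq_ext (fun N => 1 - / INR (N + 2)) _).
  - intro N; now rewrite tele_sum.
  - assert (H2 : is_lim_seq (fun N => / INR (N + 2)) 0).
    { apply (is_lim_seq_incr_n (fun N => / INR N) 2 0). 
      pose proof (is_lim_seq_inv INR p_infty is_lim_seq_INR ltac:(discriminate)) as Hi. exact Hi. }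
    pose proof (is_lim_seq_minus' (fun _ => 1) (fun N => / INR (N + 2)) 1 0 (is_lim_seq_const 1) H2) as H.
    rewrite Rminus_0_r in H. exact H.
Qed.

Lemma inv_sq_le (k : nat) : / INR (k + 1) ^ 2 <= 2 * (/ INR (k + 1) - / INR (k + 2)).
Proof.
  pose proof (INR_Sk_pos k) as H.
  replace (INR (k + 2)) with (INR (k + 1) + 1) by (rewrite !plus_INR; simpl; ring).
  set (x := INR (k + 1)) in *.
  assert (1 <= x) by (unfold x; rewrite plus_INR; simpl; pose proof (pos_INR k); lra).
  replace (2 * (/ x - / (x + 1))) with (/ (x * (x + 1) / 2)) by (field; lra).
  apply Rinv_le_contravar. nra. nra.
Qed.

Lemma exR_le (a b : nat -> R) : (forall n, Rabs (a n) <= b n) -> ex_series b -> ex_series a.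
Proof. intros H Hb. apply (@ex_series_le R_AbsRing R_CompleteNormedModule a b); auto. Qed.

Lemma exR_scal (c : R) (a : nat -> R) : ex_series a -> ex_series (fun n => c * a n).
Proof. intro H. exact (@ex_series_scal_l R_AbsRing R_NormedModule c a H). Qed.

Lemma ex_series_inv_sq : ex_series (fun k => / INR (k + 1) ^ 2).
Proof.
  apply (exR_le _ (fun k => 2 * (/ INR (k + 1) - / INR (k + 2)))).
  - intro k. rewrite Rabs_pos_eq. apply inv_sq_le.
    apply Rlt_le, Rinv_0_lt_compat, pow_lt, INR_Sk_pos.
  - apply exR_scal. eexists; apply is_series_tele.
Qed.

Lemma Series_inv_sq_le : Series (fun k => / INR (k + 1) ^ 2) <= 2.
Proof.
  replace 2 with (Series (fun k => 2 * (/ INR (k + 1) - / INR (k + 2)))).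
  - apply Series_le.
    + intro k; split. apply Rlt_le, Rinv_0_lt_compat, pow_lt, INR_Sk_pos. apply inv_sq_le.
    + apply exR_scal. eexists; apply is_series_tele.
  - rewrite Series_scal_l. rewrite (is_series_unique _ _ is_series_tele). ring.
Qed.

Lemma Series_nonneg (a : nat -> R) : (forall n, 0 <= a n) -> ex_series a -> 0 <= Series a.
Proof.
  intros H E.
  assert (Z : Series (fun n => 0 * a n) = 0) by (rewrite Series_scal_l; ring).
  rewrite <- Z. apply Series_le; auto. intro n; split; [lra|]. rewrite Rmult_0_l; auto.
Qed.

Lemma Series_inv_sq_pos : 0 <= Series (fun k => / INR (k + 1) ^ 2).
Proof.
  apply Series_nonneg; [|apply ex_series_inv_sq]. intro k. apply Rlt_le, Rinv_0_lt_compat, pow_lt, INR_Sk_pos.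
Qed.

Lemma ex_series_sq_bound (a : nat -> R) (c : R) :
  (forall k, Rabs (a k) <= c * / INR (k + 1) ^ 2) -> ex_series a.
Proof.
  intro H. apply (exR_le _ (fun k => c * / INR (k + 1) ^ 2)); [exact H|].
  apply exR_scal, ex_series_inv_sq.
Qed.

Lemma Series_sq_bound (a : nat -> R) (c : R) :
  (forall k, Rabs (a k) <= c * / INR (k + 1) ^ 2) -> 0 <= c ->
  Rabs (Series a) <= 2 * c.
Proof.
  intros H Hc.
  assert (Ea : ex_series a) by (eapply ex_series_sq_bound; eauto).
  assert (Eabs : ex_series (fun k => Rabs (a k))).
  { apply (exR_le _ (fun k => c * / INR (k + 1) ^ 2)).
    intro k; rewrite Rabs_Rabsolu; apply H.
    apply exR_scal, ex_series_inv_sq. }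
  eapply Rle_trans. apply Series_Rabs, Eabs.
  eapply Rle_trans. apply Series_le with (b := fun k => c * / INR (k + 1) ^ 2).
  intro k; split; [apply Rabs_pos|apply H].
  apply exR_scal, ex_series_inv_sq.
  rewrite Series_scal_l. pose proof Series_inv_sq_le. nra.
Qed.

Ltac nz := repeat split; try (apply Rgt_not_eq; nra); try (apply Rlt_not_eq; nra).

Definition fk (w y : R) : R := w / (w ^ 2 + y ^ 2).
Definition gP (w x : R) (k : nat) : R := fk w (x + PI * INR k) + fk w (x - PI * INR k).
Definition Pk (w x : R) : R := Series (gP w x) - fk w x.

Lemma fk_pos w y : 0 < w -> 0 < fk w y.
Proof. intro. unfold fk. apply Rdiv_lt_0_compat; nra. Qed.

Lemma fk_half w y : 0 < w -> fk w (y / 2) = 2 * fk (2 * w) y.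
Proof. intro. unfold fk. field. nz. Qed.

Lemma fk_half' w x c : 0 < w -> fk w (x / 2 + c) = 2 * fk (2 * w) (x + 2 * c).
Proof. intro. rewrite <- fk_half by lra. f_equal. field. Qed.

Lemma gP_nonneg w x k : 0 < w -> 0 <= gP w x k.
Proof. intro. unfold gP. pose proof (fk_pos w (x + PI * INR k) H). pose proof (fk_pos w (x - PI * INR k) H). lra. Qed.

Lemma PI_ge3 : 3 <= PI.
Proof. pose proof PI2_3_2. lra. Qed.

Lemma sq_lower w K z : 0 < w -> 0 <= K -> (K <= 1 \/ PI * (K - 1) <= Rabs z) ->
  w ^ 2 * (K + 1) ^ 2 <= 8 * (1 + w ^ 2) * (w ^ 2 + z ^ 2).
Proof.
  intros Hw HK [H1|H2].
  - assert ((K+1)^2 <= 4) by nra. nra.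
  - pose proof PI_ge3.
    assert (HK1 : 1 <= K \/ K < 1) by lra. destruct HK1 as [HK1|HK1].
    + assert (3 * (K - 1) <= Rabs z) by nra.
      assert (9 * (K - 1) ^ 2 <= z ^ 2).
      { assert (Hz: z^2 = Rabs z * Rabs z) by (rewrite <- Rabs_mult; rewrite Rabs_pos_eq; nra).
        rewrite Hz. nra. }
      assert ((K+1)^2 <= 2 * (K-1)^2 + 8) by (pose proof (pow2_ge_0 (K-3)); nra).
      assert (0 <= z^2) by nra. assert (0 <= (K-1)^2) by nra.
      nra.
    + assert ((K+1)^2 <= 4) by nra. assert (0 <= z^2) by nra. nra.
Qed.

Lemma fk_bound w K z : 0 < w -> 0 <= K -> (K <= 1 \/ PI * (K - 1) <= Rabs z) ->
  fk w z <= 8 * (1 + w ^ 2) / w * / (K + 1) ^ 2.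
Proof.
  intros Hw HK H. pose proof (sq_lower w K z Hw HK H).
  unfold fk. 
  assert (HL : 0 < w ^ 2 * (K + 1) ^ 2 / (8 * (1 + w ^ 2))).
  { apply Rdiv_lt_0_compat; nra. }
  replace (8 * (1 + w ^ 2) / w * / (K + 1) ^ 2) with (w * / (w ^ 2 * (K + 1) ^ 2 / (8 * (1 + w ^ 2)))) by (field; nz).
  unfold Rdiv. apply Rmult_le_compat_l; [lra|]. apply Rinv_le_contravar; auto.
  apply (Rmult_le_reg_r (8 * (1 + w^2))). nra.
  replace (w ^ 2 * (K + 1) ^ 2 * / (8 * (1 + w ^ 2)) * (8 * (1 + w ^ 2))) with (w ^ 2 * (K + 1) ^ 2) by (field; nz).
  nra.
Qed.

Lemma abs_shift x K : Rabs x <= PI -> 0 <= K ->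
  PI * (K - 1) <= Rabs (x + PI * K) /\ PI * (K - 1) <= Rabs (x - PI * K).
Proof.
  intros Hx HK. replace (PI * (K - 1)) with (PI * K - PI) by ring.
  assert (0 <= PI * K) by (pose proof PI_RGT_0; nra).
  set (c := PI * K) in *.
  unfold Rabs in *. destruct (Rcase_abs x); destruct (Rcase_abs (x + c)); destruct (Rcase_abs (x - c)); split; lra.
Qed.

Lemma gP_bound w x k : 0 < w -> Rabs x <= PI ->
  Rabs (gP w x k) <= 16 * (1 + w ^ 2) / w * / INR (k + 1) ^ 2.
Proof.
  intros Hw Hx. rewrite Rabs_pos_eq by (apply gP_nonneg; auto).
  pose proof (pos_INR k) as Hk. rewrite plus_INR. change (INR 1) with 1.
  destruct (abs_shift x (INR k) Hx Hk) as [A1 A2].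
  assert (B1 := fk_bound w (INR k) (x + PI * INR k) Hw Hk (or_intror A1)).
  assert (B2 := fk_bound w (INR k) (x - PI * INR k) Hw Hk (or_intror A2)).
  unfold gP.
  replace (16 * (1 + w ^ 2) / w * / (INR k + 1) ^ 2) with (2 * (8 * (1 + w ^ 2) / w * / (INR k + 1) ^ 2)) by (field; nz).
  lra.
Qed.

Lemma ex_gP w x : 0 < w -> Rabs x <= PI -> ex_series (gP w x).
Proof. intros. eapply ex_series_sq_bound. intro k. apply gP_bound; auto. Qed.


Lemma fk_dbl w y : 0 < w -> fk w y = 2 * fk (2 * w) (2 * y).
Proof. intro. unfold fk. field. nz. Qed.

Lemma fk_arg w a b : a = b -> fk w a = fk w b.
Proof. intros ->; reflexivity. Qed.

Lemma INR_2N1 N : INR (2 * N + 1) = 2 * INR N + 1.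
Proof. rewrite plus_INR, mult_INR. simpl. ring. Qed.

Lemma dup_finite w x N : 0 < w ->
  sum_n (gP w (x / 2)) N + sum_n (gP w (x / 2 + PI / 2)) N =
  2 * sum_n (gP (2 * w) x) (2 * N) + 2 * fk (2 * w) (x + PI) + 2 * fk (2 * w) (x + PI * INR (2 * N + 1)).
Proof.
  intro Hw. set (F := fk (2 * w)).
  assert (FA : forall a b, a = b -> F a = F b) by (intros a b ->; reflexivity).
  induction N as [|N IH].
  - rewrite !sum_O. unfold gP.
    change (INR 0) with 0. rewrite (fk_dbl w (x / 2 + PI * 0)), (fk_dbl w (x / 2 - PI * 0)),
      (fk_dbl w (x / 2 + PI / 2 + PI * 0)), (fk_dbl w (x / 2 + PI / 2 - PI * 0)) by lra.
    fold F. rewrite INR_2N1. change (INR 0) with 0.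
    rewrite (FA (2 * (x / 2 + PI * 0)) x) by field.
    rewrite (FA (2 * (x / 2 - PI * 0)) x) by field.
    rewrite (FA (2 * (x / 2 + PI / 2 + PI * 0)) (x + PI)) by field.
    rewrite (FA (2 * (x / 2 + PI / 2 - PI * 0)) (x + PI)) by field.
    rewrite (FA (x + PI * (2 * 0 + 1)) (x + PI)) by ring.
    rewrite (FA (x + PI * 0) x) by ring. rewrite (FA (x - PI * 0) x) by ring.
    fold F. ring.
  - rewrite !sum_Sn.
    replace (2 * S N)%nat with (S (S (2 * N))) by lia.
    rewrite !sum_Sn. repeat change (plus ?a ?b) with (Rplus a b).
    set (n := INR N).
    assert (Ea : gP w (x / 2) (S N) = 2 * F (x + PI * (2 * n + 2)) + 2 * F (x - PI * (2 * n + 2))).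
    { unfold gP. rewrite (fk_dbl w (x / 2 + _)), (fk_dbl w (x / 2 - _)) by lra. fold F.
      rewrite S_INR. fold n. f_equal; f_equal; apply FA; field. }
    assert (Eb : gP w (x / 2 + PI / 2) (S N) = 2 * F (x + PI * (2 * n + 3)) + 2 * F (x - PI * (2 * n + 1))).
    { unfold gP. rewrite (fk_dbl w (x / 2 + PI / 2 + _)), (fk_dbl w (x / 2 + PI / 2 - _)) by lra. fold F.
      rewrite S_INR. fold n. f_equal; f_equal; apply FA; field. }
    assert (Ec1 : gP (2 * w) x (S (2 * N)) = F (x + PI * (2 * n + 1)) + F (x - PI * (2 * n + 1))).
    { unfold gP. fold F. rewrite S_INR, mult_INR. fold n. f_equal; apply FA; simpl; ring. }
    assert (Ec2 : gP (2 * w) x (S (S (2 * N))) = F (x + PI * (2 * n + 2)) + F (x - PI * (2 * n + 2))).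
    { unfold gP. fold F. rewrite !S_INR, mult_INR. fold n. f_equal; apply FA; simpl; ring. }
    rewrite Ea, Eb, Ec1, Ec2.
    rewrite INR_2N1 in IH. fold n in IH.
    rewrite (FA (x + PI * INR (S (S (2 * N)) + 1)) (x + PI * (2 * n + 3))) by
      (rewrite plus_INR, !S_INR, mult_INR; simpl; fold n; ring).
    lra.
Qed.

Lemma lim_series (a : nat -> R) : ex_series a -> is_lim_seq (sum_n a) (Series a).
Proof. intro H. apply Series_correct in H. exact H. Qed.

Lemma lim_scal (u : nat -> R) (c l : R) : is_lim_seq u l -> is_lim_seq (fun n => c * u n) (c * l).
Proof. intro H. apply (is_lim_seq_scal_l u c l H). Qed.

Lemma lim_uniq (u : nat -> R) (l1 l2 : R) : is_lim_seq u l1 -> is_lim_seq u l2 -> l1 = l2.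
Proof.
  intros H1 H2. apply is_lim_seq_unique in H1. apply is_lim_seq_unique in H2.
  rewrite H1 in H2. injection H2; auto.
Qed.

Lemma lim_term0 (a : nat -> R) (phi : nat -> nat) (b : nat -> R) :
  ex_series a -> (forall n, (phi n < phi (S n))%nat) -> (forall n, 0 <= b n <= a (phi n)) ->
  is_lim_seq b 0.
Proof.
  intros Ha Hphi Hb.
  apply (is_lim_seq_le_le (fun _ => 0) b (fun n => a (phi n))); auto.
  apply is_lim_seq_const.
  apply (is_lim_seq_subseq a 0 phi). apply eventually_subseq; auto.
  apply ex_series_lim_0; auto.
Qed.

Lemma dup_P w x : 0 < w -> Rabs x <= PI ->
  Pk w (x / 2) + Pk w (x / 2 + PI / 2) = 2 * Pk (2 * w) x.
Proof.
  intros Hw Hx.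
  assert (E1 : ex_series (gP w (x / 2))) by (apply ex_gP; auto; rewrite Rabs_div, Rabs_pos_eq with (x:=2) by lra; pose proof PI_RGT_0; lra).
  assert (E2 : ex_series (gP w (x / 2 + PI / 2))).
  { apply ex_gP; auto. pose proof PI_RGT_0. unfold Rabs in *. destruct (Rcase_abs x); destruct (Rcase_abs (x / 2 + PI / 2)); lra. }
  assert (E3 : ex_series (gP (2 * w) x)) by (apply ex_gP; auto; lra).
  assert (L1 : is_lim_seq (fun N => sum_n (gP w (x / 2)) N + sum_n (gP w (x / 2 + PI / 2)) N)
                 (Series (gP w (x / 2)) + Series (gP w (x / 2 + PI / 2)))).
  { apply is_lim_seq_plus'; apply lim_series; auto. }
  assert (L2 : is_lim_seq (fun N => sum_n (gP w (x / 2)) N + sum_n (gP w (x / 2 + PI / 2)) N)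
                 (2 * Series (gP (2 * w) x) + 2 * fk (2 * w) (x + PI) + 2 * 0)).
  { apply (is_lim_seq_ext (fun N => 2 * sum_n (gP (2 * w) x) (2 * N) + 2 * fk (2 * w) (x + PI) + 2 * fk (2 * w) (x + PI * INR (2 * N + 1)))).
    intro N. rewrite dup_finite; auto.
    apply is_lim_seq_plus'; [apply is_lim_seq_plus'|].
    - apply lim_scal. apply (is_lim_seq_subseq (sum_n (gP (2 * w) x)) _ (fun N => 2 * N)%nat).
      apply eventually_subseq. intro; lia. apply lim_series; auto.
    - apply is_lim_seq_const.
    - apply lim_scal. apply (lim_term0 (gP (2 * w) x) (fun N => 2 * N + 1)%nat); auto.
      intro; lia. intro N. split. apply Rlt_le, fk_pos; lra.
      unfold gP. pose proof (fk_pos (2 * w) (x - PI * INR (2 * N + 1))). lra. }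
  pose proof (lim_uniq _ _ _ L1 L2) as HE.
  unfold Pk.
  rewrite (fk_dbl w (x / 2)), (fk_dbl w (x / 2 + PI / 2)) by lra.
  rewrite (fk_arg _ (2 * (x / 2)) x) by field.
  rewrite (fk_arg _ (2 * (x / 2 + PI / 2)) (x + PI)) by field.
  lra.
Qed.

Lemma per_finite w x N :
  sum_n (gP w (x - PI)) N - fk w (x - PI) =
  sum_n (gP w x) N - fk w x - fk w (x + PI * INR N) + fk w (x - PI * INR (S N)).
Proof.
  induction N as [|N IH].
  - rewrite !sum_O. unfold gP. change (INR 0) with 0. change (INR 1) with 1.
    rewrite (fk_arg w (x - PI + PI * 0) (x - PI)) by ring.
    rewrite (fk_arg w (x - PI - PI * 0) (x - PI)) by ring.
    rewrite (fk_arg w (x + PI * 0) x) by ring.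
    rewrite (fk_arg w (x - PI * 0) x) by ring.
    rewrite (fk_arg w (x - PI * 1) (x - PI)) by ring. ring.
  - rewrite !sum_Sn. repeat change (plus ?a ?b) with (Rplus a b).
    unfold gP at 2 4. rewrite !S_INR. rewrite S_INR in IH.
    rewrite (fk_arg w (x - PI + PI * (INR N + 1)) (x + PI * INR N)) by ring.
    rewrite (fk_arg w (x - PI - PI * (INR N + 1)) (x - PI * (INR N + 1 + 1))) by ring.
    lra.
Qed.

Lemma per_P w x : 0 < w -> Rabs x <= PI -> Rabs (x - PI) <= PI -> Pk w (x - PI) = Pk w x.
Proof.
  intros Hw H1 H2.
  assert (E1 := ex_gP w x Hw H1). assert (E2 := ex_gP w (x - PI) Hw H2).
  assert (L1 : is_lim_seq (fun N => sum_n (gP w (x - PI)) N - fk w (x - PI)) (Series (gP w (x - PI)) - fk w (x - PI))).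
  { apply is_lim_seq_minus'. apply lim_series; auto. apply is_lim_seq_const. }
  assert (L2 : is_lim_seq (fun N => sum_n (gP w (x - PI)) N - fk w (x - PI)) (Series (gP w x) - fk w x - 0 + 0)).
  { apply (is_lim_seq_ext (fun N => sum_n (gP w x) N - fk w x - fk w (x + PI * INR N) + fk w (x - PI * INR (S N)))).
    intro N; rewrite per_finite; auto.
    apply is_lim_seq_plus'; [apply is_lim_seq_minus'; [apply is_lim_seq_minus'|]|].
    - apply lim_series; auto.
    - apply is_lim_seq_const.
    - apply (lim_term0 (gP w x) (fun N => N)); auto. intro N. split. apply Rlt_le, fk_pos; lra.
      unfold gP. pose proof (fk_pos w (x - PI * INR N)). lra.
    - apply (lim_term0 (gP w x) S); auto. intro N. split. apply Rlt_le, fk_pos; lra.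
      unfold gP. pose proof (fk_pos w (x + PI * INR (S N))). lra. }
  pose proof (lim_uniq _ _ _ L1 L2). unfold Pk. lra.
Qed.

Definition T3 (t : R) : R := 1 + t + t ^ 2 / 2 + t ^ 3 / 6.

Lemma exp_series_R (t : R) : is_series (fun k => t ^ k / INR (fact k)) (exp t).
Proof.
  pose proof (is_exp_Reals t) as H. unfold is_pseries in H.
  eapply is_series_ext; [|exact H]. intro k. simpl. rewrite pow_n_pow. unfold scal; simpl.
  unfold mult; simpl. unfold Rdiv. ring.
Qed.

Lemma exp_tail (t : R) :
  is_series (fun k => t ^ 4 * (t ^ k / INR (fact (4 + k)))) (exp t - T3 t).
Proof.
  pose proof (exp_series_R t) as H.
  assert (H4 : is_series (fun k => t ^ (4 + k) / INR (fact (4 + k))) (exp t - T3 t)).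
  { apply (is_series_incr_n (fun k => t ^ k / INR (fact k)) 4 (exp t - T3 t)). lia.
    match goal with |- is_series _ ?L => replace L with (exp t); [exact H|] end.
    { simpl Init.Nat.pred. rewrite !sum_Sn, sum_O. repeat change (plus ?a ?b) with (Rplus a b).
      unfold T3. simpl. field. } }
  eapply is_series_ext; [|exact H4]. intro k. cbv beta. rewrite (pow_add t 4 k). unfold Rdiv. apply Rmult_assoc.
Qed.

Lemma exp_le_9 (t : R) : t <= 2 -> exp t <= 9.
Proof.
  intro H. apply Rle_trans with (exp 2). destruct (Req_dec t 2); [subst; lra|]. left; apply exp_increasing; lra.
  replace 2 with (1 + 1) by ring. rewrite exp_plus. pose proof exp_le_3. pose proof (exp_pos 1). nra.
Qed.

Lemma exp_taylor (t : R) : Rabs t <= 2 -> Rabs (exp t - T3 t) <= 9 * t ^ 4.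
Proof.
  intro Ht.
  pose proof (exp_tail t) as H. apply is_series_unique in H.
  rewrite <- H. rewrite Series_scal_l. rewrite Rabs_mult.
  assert (Rabs (t^4) = t^4) by (apply Rabs_pos_eq; nra). rewrite H0.
  rewrite Rmult_comm. apply Rmult_le_compat_r; [nra|].
  assert (Eabs : ex_series (fun k => Rabs t ^ k / INR (fact k))) by (eexists; apply exp_series_R).
  assert (Hb : forall k, Rabs (t ^ k / INR (fact (4 + k))) <= Rabs t ^ k / INR (fact k)).
  { intro k. unfold Rdiv. rewrite Rabs_mult, <- RPow_abs. rewrite Rabs_inv.
    rewrite (Rabs_pos_eq (INR (fact (4 + k)))) by apply pos_INR. apply Rmult_le_compat_l. apply pow_le, Rabs_pos.
    apply Rinv_le_contravar. apply lt_0_INR, lt_O_fact. apply le_INR, fact_le. lia. }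
  eapply Rle_trans. apply Series_Rabs. eapply exR_le. intro k. rewrite Rabs_Rabsolu. apply Hb. exact Eabs.
  eapply Rle_trans. apply Series_le; [|exact Eabs]. intro k; split; [apply Rabs_pos|apply Hb].
  rewrite (is_series_unique _ _ (exp_series_R (Rabs t))). apply exp_le_9; auto.
Qed.

Lemma exp_T3_lower (t : R) : 0 <= t -> T3 t <= exp t.
Proof.
  intro Ht. pose proof (exp_tail t) as H. apply is_series_unique in H.
  assert (0 <= Series (fun k => t ^ 4 * (t ^ k / INR (fact (4 + k))))).
  { apply Series_nonneg. intro k. apply Rmult_le_pos. nra. apply Rmult_le_pos. apply pow_le; auto.
    apply Rlt_le, Rinv_0_lt_compat, lt_0_INR, lt_O_fact.
    eexists; apply exp_tail. }
  lra.
Qed.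

Definition Qk (w x : R) : R :=
  (exp (2 * w) - exp (- (2 * w))) / (exp (2 * w) + exp (- (2 * w)) - 2 + 4 * sin x ^ 2).

Lemma exp2w_gt1 w : 0 < w -> 1 < exp (2 * w).
Proof. intro. rewrite <- exp_0. apply exp_increasing. lra. Qed.

Lemma cden_pos w : 0 < w -> 0 < exp (2 * w) + exp (- (2 * w)) - 2.
Proof.
  intro Hw. pose proof (exp2w_gt1 w Hw). rewrite exp_Ropp. set (a := exp (2 * w)) in *.
  replace (a + / a - 2) with ((a - 1) ^ 2 / a) by (field; lra).
  apply Rdiv_lt_0_compat; nra.
Qed.

Lemma den_pos w x : 0 < w -> 0 < exp (2 * w) + exp (- (2 * w)) - 2 + 4 * sin x ^ 2.
Proof. intro Hw. pose proof (cden_pos w Hw). pose proof (pow2_ge_0 (sin x)). lra. Qed.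

Lemma dup_Q w x : 0 < w -> Qk w (x / 2) + Qk w (x / 2 + PI / 2) = 2 * Qk (2 * w) x.
Proof.
  intro Hw. unfold Qk.
  pose proof (exp2w_gt1 w Hw) as Ha.
  assert (E4 : exp (2 * (2 * w)) = exp (2 * w) * exp (2 * w)) by (rewrite <- exp_plus; f_equal; ring).
  assert (E4' : exp (- (2 * (2 * w))) = / (exp (2 * w) * exp (2 * w))) by (rewrite <- E4; apply exp_Ropp).
  rewrite E4, E4', exp_Ropp.
  rewrite sin_plus, sin_PI2, cos_PI2.
  assert (Hs : sin (x / 2) ^ 2 = (1 - cos x) / 2).
  { replace x with (2 * (x / 2)) at 2 by field. rewrite cos_2a_sin. field. }
  assert (Hc : cos (x / 2) ^ 2 = (1 + cos x) / 2).
  { replace x with (2 * (x / 2)) at 2 by field. rewrite cos_2a_cos. field. }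
  assert (Hsx : sin x ^ 2 = 1 - cos x ^ 2) by (pose proof (sin2_cos2 x); unfold Rsqr in *; nra).
  replace ((sin (x / 2) * 0 + cos (x / 2) * 1) ^ 2) with (cos (x / 2) ^ 2) by ring.
  rewrite Hs, Hc, Hsx.
  set (a := exp (2 * w)) in *. set (c := cos x).
  assert (Hc1 : -1 <= c <= 1) by (unfold c; split; [apply COS_bound|apply COS_bound]).
  assert (H1 : 0 < a + / a - 2) by (replace (a + / a - 2) with ((a - 1) ^ 2 / a) by (field; lra); apply Rdiv_lt_0_compat; nra).
  field. destruct Hc1 as [Hc1 Hc2].
  assert (Ha2 : 0 < a * a - 1) by nra. assert (0 <= 1 - c ^ 2) by nra. assert (0 <= (1 - c ^ 2) * (a * a)) by (apply Rmult_le_pos; nra). assert (0 < (a - 1) ^ 2) by nra.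
  repeat split; apply Rgt_not_eq; nra.
Qed.

Lemma sin_bounds_pos y : 0 <= y -> y <= PI / 2 -> y - y ^ 3 / 6 <= sin y <= y.
Proof.
  intros H1 H2. pose proof PI_4.
  destruct (sin_bound y 0 H1 ltac:(lra)) as [L U].
  unfold sin_approx, sin_term in L, U. simpl in L, U.
  split; [lra|].
  assert (y ^ 2 <= 4) by nra. nra.
Qed.

Lemma sin_sq_bounds x : Rabs x <= PI / 2 ->
  x ^ 2 - x ^ 4 / 3 <= sin x ^ 2 <= x ^ 2 /\ x ^ 2 / 9 <= sin x ^ 2.
Proof.
  intro Hx. pose proof PI_4.
  assert (E : sin x ^ 2 = sin (Rabs x) ^ 2 /\ x ^ 2 = Rabs x ^ 2).
  { unfold Rabs; destruct (Rcase_abs x); [rewrite sin_neg|]; split; ring. }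
  destruct E as [E1 E2]. rewrite E1, E2.
  replace (x ^ 4) with (Rabs x ^ 4) by (rewrite <- (Rabs_pos_eq (x^4)) by nra; rewrite <- RPow_abs; reflexivity).
  set (y := Rabs x) in *. assert (0 <= y) by apply Rabs_pos.
  destruct (sin_bounds_pos y H0 Hx) as [L U].
  assert (y ^ 2 <= 4) by nra.
  assert (y / 3 <= y - y ^ 3 / 6) by nra.
  split; [split|].
  - assert ((y - y ^ 3 / 6) ^ 2 <= sin y ^ 2) by nra. nra.
  - nra.
  - nra.
Qed.

Lemma alg_bound w x s c u : 0 < w -> w <= 1 ->
  Rabs (c - 4 * w ^ 2) <= 288 * w ^ 4 -> 2 * w ^ 2 <= c ->
  Rabs (s - 4 * w) <= 291 * w ^ 3 ->
  4 * x ^ 2 - 4 * x ^ 4 / 3 <= u -> u <= 4 * x ^ 2 -> 4 * x ^ 2 / 9 <= u ->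
  Rabs (w / (w ^ 2 + x ^ 2) - s / (c + u)) <= 1350 * w.
Proof.
  intros Hw Hw1 Hc Hc2 Hs Hu1 Hu2 Hu3.
  set (B := w ^ 2 + x ^ 2).
  assert (HB : 0 < B) by (unfold B; nra).
  assert (HD : 4 / 9 * B <= c + u) by (unfold B; nra).
  assert (HD' : 0 < c + u) by nra.
  replace (w / B - s / (c + u)) with ((w * (c - 4 * w ^ 2) + w * (u - 4 * x ^ 2) - (s - 4 * w) * B) / (B * (c + u)))
    by (unfold B; field; nz).
  assert (HN : Rabs (w * (c - 4 * w ^ 2) + w * (u - 4 * x ^ 2) - (s - 4 * w) * B) <= 581 * w * B ^ 2).
  { assert (Hw4 : w ^ 4 <= B ^ 2) by (unfold B; nra).
    assert (Hx4 : x ^ 4 <= B ^ 2) by (unfold B; nra).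
    assert (Hw2 : w ^ 2 <= B) by (unfold B; nra).
    assert (T1 : Rabs (w * (c - 4 * w ^ 2)) <= 288 * w * B ^ 2).
    { rewrite Rabs_mult, Rabs_pos_eq by lra. assert (288 * w ^ 4 <= 288 * B ^ 2) by lra. nra. }
    assert (T2 : Rabs (w * (u - 4 * x ^ 2)) <= 2 * w * B ^ 2).
    { rewrite Rabs_mult, (Rabs_pos_eq w) by lra.
      assert (Rabs (u - 4 * x ^ 2) <= 2 * B ^ 2) by (apply Rabs_le; split; nra). nra. }
    assert (T3' : Rabs ((s - 4 * w) * B) <= 291 * w * B ^ 2).
    { rewrite Rabs_mult, (Rabs_pos_eq B) by lra. assert (0 <= w * B) by nra.
      assert (w ^ 3 * B <= w * B ^ 2).
      { replace (w ^ 3 * B) with (w ^ 2 * (w * B)) by ring. replace (w * B ^ 2) with (B * (w * B)) by ring.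
        apply Rmult_le_compat_r; lra. }
      assert (Rabs (s - 4 * w) * B <= 291 * w ^ 3 * B) by (apply Rmult_le_compat_r; lra). lra. }
    eapply Rle_trans. apply Rabs_triang. rewrite Rabs_Ropp.
    eapply Rle_trans. apply Rplus_le_compat_r. apply Rabs_triang. lra. }
  rewrite Rabs_div by nz. rewrite (Rabs_pos_eq (B * (c + u))) by nra.
  apply (Rmult_le_reg_r (B * (c + u))). nra.
  unfold Rdiv. rewrite Rmult_assoc, Rinv_l by nz. rewrite Rmult_1_r.
  assert (4 / 9 * B ^ 2 <= B * (c + u)) by nra.
  assert (0 <= w * B ^ 2) by nra.
  nra.
Qed.

Lemma fQ_bound w x : 0 < w -> w <= 1 -> Rabs x <= PI / 2 ->
  Rabs (fk w x - Qk w x) <= 1350 * w.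
Proof.
  intros Hw Hw1 Hx.
  destruct (sin_sq_bounds x Hx) as [[S1 S2] S3].
  unfold fk, Qk.
  assert (Ht : Rabs (2 * w) <= 2) by (rewrite Rabs_pos_eq; lra).
  assert (Ht' : Rabs (- (2 * w)) <= 2) by (rewrite Rabs_Ropp; auto).
  pose proof (exp_taylor (2 * w) Ht) as Ea. pose proof (exp_taylor (- (2 * w)) Ht') as Eb.
  pose proof (exp_T3_lower (2 * w) ltac:(lra)) as La.
  pose proof (exp_ineq1_le (- (2 * w))) as Lb.
  unfold T3 in *.
  generalize dependent (exp (2 * w)); intros ea Ea La.
  generalize dependent (exp (- (2 * w))); intros eb Eb Lb.
  assert (Hw43 : w ^ 4 <= w ^ 3) by (replace (w^4) with (w * w^3) by ring; assert (0 <= w^3) by nra; nra).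
  apply alg_bound; auto; try lra.
  - replace (ea + eb - 2 - 4 * w ^ 2) with ((ea - (1 + 2 * w + (2 * w) ^ 2 / 2 + (2 * w) ^ 3 / 6)) + (eb - (1 + - (2 * w) + (- (2 * w)) ^ 2 / 2 + (- (2 * w)) ^ 3 / 6))) by field.
    eapply Rle_trans. apply Rabs_triang. lra.
  - nra.
  - replace (ea - eb - 4 * w) with ((ea - (1 + 2 * w + (2 * w) ^ 2 / 2 + (2 * w) ^ 3 / 6)) - (eb - (1 + - (2 * w) + (- (2 * w)) ^ 2 / 2 + (- (2 * w)) ^ 3 / 6)) + (2 * w) ^ 3 / 3) by field.
    eapply Rle_trans. apply Rabs_triang. rewrite (Rabs_pos_eq ((2 * w) ^ 3 / 3)) by nra.
    generalize dependent (ea - (1 + 2 * w + (2 * w) ^ 2 / 2 + (2 * w) ^ 3 / 6)); intros A HA.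
    generalize dependent (eb - (1 + - (2 * w) + (- (2 * w)) ^ 2 / 2 + (- (2 * w)) ^ 3 / 6)); intros B HB.
    pose proof (Rabs_triang A (- B)) as T. rewrite Rabs_Ropp in T. change (A + - B) with (A - B) in T.
    replace ((- (2 * w)) ^ 4) with (16 * w ^ 4) in HB by ring.
    replace ((2 * w) ^ 4) with (16 * w ^ 4) in HA by ring.
    replace ((2 * w) ^ 3 / 3) with (8 / 3 * w ^ 3) by field.
    assert (0 <= w ^ 3) by nra. lra.
Qed.

Definition Dk (w x : R) : R := Pk w x - Qk w x.

Lemma Pk_split w x : 0 < w -> Rabs x <= PI -> Pk w x = fk w x + Series (fun k => gP w x (S k)).
Proof.
  intros Hw Hx. unfold Pk. rewrite Series_incr_1 by (apply ex_gP; auto).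
  unfold gP at 1. change (INR 0) with 0.
  rewrite (fk_arg w (x + PI * 0) x), (fk_arg w (x - PI * 0) x) by ring. ring.
Qed.

Lemma tail_bound w x : 0 < w -> Rabs x <= PI / 2 -> Rabs (Series (fun k => gP w x (S k))) <= 2 * w.
Proof.
  intros Hw Hx.
  apply Series_sq_bound; [|lra].
  intro k. rewrite Rabs_pos_eq by (apply gP_nonneg; auto).
  pose proof PI_ge3. pose proof (pos_INR k).
  assert (HK : INR (k + 1) = INR k + 1) by (rewrite plus_INR; reflexivity).
  rewrite HK. unfold gP. rewrite S_INR.
  set (K := INR k + 1) in *. assert (1 <= K) by (unfold K; lra).
  assert (B : forall z, Rabs z >= PI * K - PI / 2 -> fk w z <= 4 / 9 * w * / K ^ 2).
  { intros z Hz. unfold fk.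
    assert (z ^ 2 >= 9 / 4 * K ^ 2).
    { assert (3 / 2 * K <= Rabs z) by nra.
      assert (Hzz : z ^ 2 = Rabs z * Rabs z) by (rewrite <- Rabs_mult; rewrite Rabs_pos_eq; nra).
      rewrite Hzz. nra. }
    replace (4 / 9 * w * / K ^ 2) with (w / (9 / 4 * K ^ 2)) by (field; nz).
    unfold Rdiv. apply Rmult_le_compat_l; [lra|]. apply Rinv_le_contravar; nra. }
  assert (B1 : fk w (x + PI * K) <= 4 / 9 * w * / K ^ 2).
  { apply B. pose proof (Rabs_triang (x + PI * K) (- x)). rewrite Rabs_Ropp in H2.
    replace (x + PI * K + - x) with (PI * K) in H2 by ring. rewrite Rabs_pos_eq in H2 by nra. lra. }
  assert (B2 : fk w (x - PI * K) <= 4 / 9 * w * / K ^ 2).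
  { apply B. pose proof (Rabs_triang (x - PI * K) (- x)). rewrite Rabs_Ropp in H2.
    replace (x - PI * K + - x) with (- (PI * K)) in H2 by ring. rewrite Rabs_Ropp, Rabs_pos_eq in H2 by nra. lra. }
  assert (0 < / K ^ 2) by (apply Rinv_0_lt_compat; nra).
  nra.
Qed.

Lemma D_small w x : 0 < w -> w <= 1 -> Rabs x <= PI / 2 -> Rabs (Dk w x) <= 1352 * w.
Proof.
  intros Hw Hw1 Hx. unfold Dk. pose proof PI_RGT_0.
  rewrite Pk_split by (auto; lra).
  pose proof (fQ_bound w x Hw Hw1 Hx). pose proof (tail_bound w x Hw Hx).
  replace (fk w x + Series (fun k => gP w x (S k)) - Qk w x) with ((fk w x - Qk w x) + Series (fun k => gP w x (S k))) by ring.
  eapply Rle_trans. apply Rabs_triang. lra.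
Qed.

Lemma Qk_per w x : Qk w (x - PI) = Qk w x.
Proof. unfold Qk. rewrite sin_minus, cos_PI, sin_PI. f_equal. f_equal. ring. Qed.

Lemma D_small_region w x : 0 < w -> w <= 1 -> 0 <= x <= PI -> Rabs (Dk w x) <= 1352 * w.
Proof.
  intros Hw Hw1 Hx. pose proof PI_RGT_0.
  destruct (Rle_dec x (PI / 2)).
  - apply D_small; auto. rewrite Rabs_pos_eq; lra.
  - replace (Dk w x) with (Dk w (x - PI)).
    + apply D_small; auto. rewrite Rabs_left1; lra.
    + unfold Dk. rewrite Qk_per. rewrite per_P; auto.
      rewrite Rabs_pos_eq; lra. rewrite Rabs_left1; lra.
Qed.

Lemma D_dup w x : 0 < w -> 0 <= x <= PI -> Dk (2 * w) x = (Dk w (x / 2) + Dk w (x / 2 + PI / 2)) / 2.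
Proof.
  intros Hw Hx. unfold Dk.
  pose proof (dup_P w x Hw ltac:(rewrite Rabs_pos_eq; lra)).
  pose proof (dup_Q w x Hw). lra.
Qed.

Lemma herglotz_k (k : nat) : forall w x, 0 < w -> w <= 2 ^ k -> 0 <= x <= PI ->
  Rabs (Dk w x) <= 1352 * w / 2 ^ k.
Proof.
  induction k as [|k IH]; intros w x Hw Hwk Hx.
  - simpl in *. rewrite Rdiv_1_r. apply D_small_region; auto.
  - pose proof PI_RGT_0.
    replace w with (2 * (w / 2)) at 1 by field.
    rewrite D_dup by (auto; lra).
    assert (Hp : 0 < 2 ^ k) by (apply pow_lt; lra).
    simpl pow in Hwk.
    assert (H1 := IH (w / 2) (x / 2) ltac:(lra) ltac:(lra) ltac:(lra)).
    assert (H2 := IH (w / 2) (x / 2 + PI / 2) ltac:(lra) ltac:(lra) ltac:(lra)).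
    rewrite Rabs_div by lra. rewrite (Rabs_pos_eq 2) by lra.
    eapply Rle_trans. apply Rmult_le_compat_r. lra. apply Rabs_triang.
    simpl pow. replace (1352 * w / (2 * 2 ^ k)) with ((1352 * (w / 2) / 2 ^ k + 1352 * (w / 2) / 2 ^ k) * / 2) by (field; lra).
    apply Rmult_le_compat_r; lra.
Qed.

Lemma pow2_ge (n : nat) : INR n <= 2 ^ n.
Proof.
  induction n as [|n IH]. simpl; lra.
  rewrite S_INR. simpl pow. assert (1 <= 2 ^ n) by (apply pow_R1_Rle; lra). lra.
Qed.

Lemma D_zero w x : 0 < w -> 0 <= x <= PI -> Dk w x = 0.
Proof.
  intros Hw Hx.
  destruct (Req_dec (Dk w x) 0) as [|Hne]; auto. exfalso.
  set (d := Rabs (Dk w x)). assert (Hd : 0 < d) by (apply Rabs_pos_lt; auto).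
  destruct (INR_archimed 1 (w + 1352 * w / d) ltac:(lra)) as [n Hn].
  rewrite Rmult_1_r in Hn. pose proof (pow2_ge n).
  assert (Hp : 0 < 2 ^ n) by (apply pow_lt; lra).
  assert (Hwd : 0 < 1352 * w / d) by (apply Rdiv_lt_0_compat; lra).
  pose proof (herglotz_k n w x Hw ltac:(lra) Hx) as HH. fold d in HH.
  assert (HL : 1352 * w / d < 2 ^ n) by lra.
  assert (1352 * w < d * 2 ^ n).
  { apply (Rmult_lt_compat_l d) in HL; auto. unfold Rdiv in HL.
    replace (d * (1352 * w * / d)) with (1352 * w) in HL by (field; lra). lra. }
  assert (d * 2 ^ n <= 1352 * w).
  { apply (Rmult_le_compat_r (2 ^ n)) in HH; [|lra]. unfold Rdiv in HH.
    replace (1352 * w * / 2 ^ n * 2 ^ n) with (1352 * w) in HH by (field; lra). lra. }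
  lra.
Qed.

Lemma coth_series w : 0 < w ->
  Series (fun k => 2 * w / (w ^ 2 + PI ^ 2 * INR (k + 1) ^ 2)) =
  (1 + exp (- (2 * w))) / (1 - exp (- (2 * w))) - 1 / w.
Proof.
  intro Hw. pose proof PI_RGT_0.
  pose proof (D_zero w 0 Hw ltac:(lra)) as H0. unfold Dk in H0.
  rewrite Pk_split in H0 by (auto; rewrite Rabs_R0; lra).
  assert (E : Series (fun k => gP w 0 (S k)) = Series (fun k => 2 * w / (w ^ 2 + PI ^ 2 * INR (k + 1) ^ 2))).
  { apply Series_ext. intro k. unfold gP, fk. replace (INR (S k)) with (INR (k + 1)) by (f_equal; lia).
    pose proof (INR_Sk_pos k). field. repeat split; apply Rgt_not_eq; nra. }
  rewrite <- E.
  assert (Q0 : Qk w 0 = (1 + exp (- (2 * w))) / (1 - exp (- (2 * w)))).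
  { unfold Qk. rewrite sin_0. rewrite exp_Ropp. pose proof (exp2w_gt1 w Hw).
    set (a := exp (2 * w)) in *. assert (0 < (a - 1) ^ 2) by nra. field. repeat split; apply Rgt_not_eq; nra. }
  assert (F0 : fk w 0 = 1 / w) by (unfold fk; field; lra).
  lra.
Qed.

Lemma exR_ext (a b : nat -> R) : (forall n, a n = b n) -> ex_series a -> ex_series b.
Proof. intros H E. exact (@ex_series_ext R_AbsRing R_NormedModule a b H E). Qed.

Lemma exR_plus (a b : nat -> R) : ex_series a -> ex_series b -> ex_series (fun n => a n + b n).
Proof. intros. exact (@ex_series_plus R_AbsRing R_NormedModule a b H H0). Qed.

Lemma series_derive (f df : nat -> R -> R) (K : nat -> R) (x d : R) :
  0 < d ->
  (forall y, Rabs (y - x) < d -> ex_series (fun k => f k y)) ->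
  ex_series (fun k => df k x) -> ex_series K -> (forall k, 0 <= K k) ->
  (forall k y, Rabs (y - x) < d -> Rabs (f k y - f k x - df k x * (y - x)) <= K k * (y - x) ^ 2) ->
  derivable_pt_lim (fun y => Series (fun k => f k y)) x (Series (fun k => df k x)).
Proof.
  intros Hd Hf Hdf HK HK0 Hr eps Heps.
  set (SK := Series K).
  assert (HSK : 0 <= SK) by (apply Series_nonneg; auto).
  assert (Hpos : 0 < Rmin d (eps / (SK + 1))).
  { apply Rmin_pos; auto. apply Rdiv_lt_0_compat; lra. }
  exists (mkposreal _ Hpos). intros h Hh0 Hh. simpl in Hh.
  assert (Hh1 : Rabs h < d) by (eapply Rlt_le_trans; [exact Hh|apply Rmin_l]).
  assert (Hh2 : Rabs h < eps / (SK + 1)) by (eapply Rlt_le_trans; [exact Hh|apply Rmin_r]).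
  assert (Hxh : Rabs (x + h - x) < d) by (replace (x + h - x) with h by ring; auto).
  assert (Hx0 : Rabs (x - x) < d) by (replace (x - x) with 0 by ring; rewrite Rabs_R0; auto).
  set (r := fun k => f k (x + h) - f k x - df k x * h).
  assert (Er : ex_series r).
  { apply (exR_le _ (fun k => K k * h ^ 2)).
    - intro k. unfold r. pose proof (Hr k (x + h) Hxh). replace (x + h - x) with h in H by ring. exact H.
    - apply (exR_ext (fun k => h ^ 2 * K k)). intro; ring. apply exR_scal; auto. }
  assert (Sr : Series r = Series (fun k => f k (x + h)) - Series (fun k => f k x) - Series (fun k => df k x) * h).
  { unfold r. rewrite Series_minus. rewrite Series_minus. rewrite Series_scal_r. reflexivity.
    apply Hf; auto. apply Hf; auto.
    apply (exR_ext (fun k => f k (x + h) + -1 * f k x)). intro; ring.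
    apply exR_plus. apply Hf; auto. apply exR_scal, Hf; auto.
    apply (exR_ext (fun k => h * df k x)). intro; ring. apply exR_scal; auto. }
  assert (Br : Rabs (Series r) <= SK * h ^ 2).
  { eapply Rle_trans. apply Series_Rabs.
    apply (exR_le _ (fun k => K k * h ^ 2)). intro k. rewrite Rabs_Rabsolu. unfold r.
    pose proof (Hr k (x + h) Hxh). replace (x + h - x) with h in H by ring. exact H.
    apply (exR_ext (fun k => h ^ 2 * K k)). intro; ring. apply exR_scal; auto.
    eapply Rle_trans. apply (Series_le _ (fun k => K k * h ^ 2)).
    intro k; split; [apply Rabs_pos|]. unfold r.
    pose proof (Hr k (x + h) Hxh). replace (x + h - x) with h in H by ring. exact H.
    apply (exR_ext (fun k => h ^ 2 * K k)). intro; ring. apply exR_scal; auto.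
    rewrite Series_scal_r. unfold SK; lra. }
  replace ((Series (fun k => f k (x + h)) - Series (fun k => f k x)) / h - Series (fun k => df k x))
    with (Series r / h) by (rewrite Sr; field; auto).
  rewrite Rabs_div by auto.
  assert (Hah : 0 < Rabs h) by (apply Rabs_pos_lt; auto).
  apply (Rmult_lt_reg_r (Rabs h)); auto. unfold Rdiv. rewrite Rmult_assoc, Rinv_l by lra. rewrite Rmult_1_r.
  assert (h ^ 2 = Rabs h * Rabs h) by (rewrite <- Rabs_mult; rewrite Rabs_pos_eq; nra).
  assert (SK * Rabs h < eps).
  { apply (Rmult_lt_compat_l (SK + 1)) in Hh2; [|lra].
    replace ((SK + 1) * (eps / (SK + 1))) with eps in Hh2 by (field; lra). nra. }
  nra.
Qed.

Definition aL (s : nat) (n : nat) : R := match n with O => 0 | S _ => / INR n ^ s end.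

Lemma Li_PSeries s z : Li s z = PSeries (aL s) z.
Proof.
  unfold Li, PSeries. symmetry. rewrite Series_incr_1_aux.
  - apply Series_ext. intro k.
    replace (k + 1)%nat with (S k) by lia. unfold aL. unfold Rdiv. ring.
  - unfold aL. ring.
Qed.

Lemma aL_le1 s n : Rabs (aL s n) <= 1.
Proof.
  destruct n as [|n]; unfold aL. rewrite Rabs_R0; lra.
  assert (H1 : 1 <= INR (S n)) by (rewrite S_INR; pose proof (pos_INR n); lra).
  assert (1 <= INR (S n) ^ s) by (apply pow_R1_Rle; auto).
  rewrite Rabs_pos_eq by (apply Rlt_le, Rinv_0_lt_compat; lra).
  rewrite <- Rinv_1. apply Rinv_le_contravar; lra.
Qed.

Lemma radius_aL s q : Rabs q < 1 -> Rbar_lt (Rabs q) (CV_radius (aL s)).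
Proof.
  intro Hq.
  assert (H : Rbar_le 1 (CV_radius (aL s))).
  { destruct (CV_radius_bounded (aL s)) as [Hub _]. apply Hub.
    exists 1. intro n. rewrite pow1, Rmult_1_r. apply aL_le1. }
  destruct (CV_radius (aL s)) as [r| |]; simpl in *; auto. lra.
Qed.

Lemma PS_derive_aL s q : q * PSeries (PS_derive (aL (S s))) q = PSeries (aL s) q.
Proof.
  symmetry. unfold PSeries at 1. rewrite Series_incr_1_aux.
  2: { simpl. unfold scal; simpl; unfold mult; simpl; ring. }
  unfold PSeries. rewrite <- Series_scal_l. apply Series_ext. intro k.
  unfold PS_derive, aL.
  assert (0 < INR (S k)) by (rewrite S_INR; pose proof (pos_INR k); lra).
  assert (0 < INR (S k) ^ s) by (apply pow_lt; auto).
  match goal with |- ?a = ?b => change (@eq R a b) end.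
  replace (q ^ S k) with (q * q ^ k) by reflexivity.
  replace (INR (S k) ^ S s) with (INR (S k) * INR (S k) ^ s) by reflexivity.
  field. repeat split; apply Rgt_not_eq; auto.
Qed.

Lemma Li_derive s q : Rabs q < 1 ->
  derivable_pt_lim (fun z => Li (S s) z) q (PSeries (PS_derive (aL (S s))) q).
Proof.
  intro Hq. apply is_derive_Reals.
  apply (is_derive_ext (PSeries (aL (S s)))). intro t; symmetry; apply Li_PSeries.
  apply is_derive_PSeries. apply radius_aL; auto.
Qed.

Lemma Li1_ln q : 0 <= q < 1 -> Li 1 q = - ln (1 - q).
Proof.
  intro Hq. rewrite Li_PSeries.
  set (g := fun y => PSeries (aL 1) y + ln (1 - y)).
  assert (Hd : forall y, Rabs y < 1 -> derivable_pt_lim g y 0).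
  { intros y Hy.
    assert (Hy1 : y < 1) by (unfold Rabs in Hy; destruct (Rcase_abs y); lra).
    replace 0 with (PSeries (PS_derive (aL 1)) y + (- 1) * / (1 - y)).
    - apply derivable_pt_lim_plus.
      + apply is_derive_Reals. apply is_derive_PSeries. apply radius_aL; auto.
      + apply is_derive_Reals. auto_derive. lra. field. lra.
    - assert (E : PSeries (PS_derive (aL 1)) y = / (1 - y)).
      { unfold PSeries. rewrite <- (is_series_unique _ _ (is_series_geom y Hy)).
        apply Series_ext. intro n. unfold PS_derive, aL.
        assert (0 < INR (S n)) by (rewrite S_INR; pose proof (pos_INR n); lra).
        match goal with |- ?a = ?b => change (@eq R a b) end. rewrite pow_1. field. lra. }
      rewrite E. field. lra. }
  assert (Hg : g q = g 0).
  { destruct (Req_dec q 0) as [->|Hq0]; auto.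
    destruct (MVT_cor2 g (fun _ => 0) 0 q ltac:(lra)) as [c [Hc _]].
    intros c Hc. apply Hd. rewrite Rabs_pos_eq; lra. lra. }
  unfold g in Hg. rewrite PSeries_0 in Hg. simpl aL in Hg. rewrite Rminus_0_r, ln_1 in Hg. lra.
Qed.

Ltac toR := match goal with |- ?a = ?b => change (@eq R a b) end.

Definition am (k : nat) : R := PI ^ 2 * INR (k + 1) ^ 2.
Definition fm (w : R) (k : nat) : R := am k * ln (1 + w ^ 2 / am k) - w ^ 2.

Lemma am_ge k : 9 * INR (k + 1) ^ 2 <= am k /\ 1 <= INR (k + 1) /\ 9 <= am k.
Proof.
  unfold am. pose proof PI_ge3. assert (H1 : 1 <= INR (k + 1)) by (rewrite plus_INR; simpl; pose proof (pos_INR k); lra).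
  assert (1 <= INR (k + 1) ^ 2) by nra.
  assert (9 <= PI ^ 2) by nra. split; [|split]; nra.
Qed.

Lemma ln1p_upper y : 0 <= y -> ln (1 + y) <= y.
Proof.
  intro. rewrite <- (ln_exp y) at 2. apply ln_le. lra. apply exp_ineq1_le.
Qed.

Lemma ln1p_lower y : 0 <= y -> y - y ^ 2 / 2 <= ln (1 + y).
Proof.
  intro Hy. set (h := fun t => ln (1 + t) - t + t ^ 2 / 2).
  assert (Hd : forall c, 0 <= c -> derivable_pt_lim h c (c ^ 2 / (1 + c))).
  { intros c Hc. apply is_derive_Reals. unfold h. auto_derive. lra. field. lra. }
  destruct (Req_dec y 0) as [->|Hy0].
  - rewrite Rplus_0_r, ln_1. lra.
  - destruct (MVT_cor2 h (fun c => c ^ 2 / (1 + c)) 0 y ltac:(lra)) as [c [Hc Hc2]].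
    intros c Hc. apply Hd. lra.
    unfold h in Hc. rewrite Rplus_0_r, ln_1 in Hc.
    assert (0 <= c ^ 2 / (1 + c) * (y - 0)) by (apply Rmult_le_pos; [apply Rdiv_le_0_compat|]; nra).
    lra.
Qed.

Lemma fm_bound w k : Rabs (fm w k) <= w ^ 4 / 2 * / INR (k + 1) ^ 2.
Proof.
  destruct (am_ge k) as [H1 [H2 H3]].
  set (a := am k) in *. set (m := INR (k + 1)) in *.
  unfold fm. fold a. set (y := w ^ 2 / a).
  assert (Hy : 0 <= y) by (unfold y; apply Rdiv_le_0_compat; nra).
  pose proof (ln1p_upper y Hy). pose proof (ln1p_lower y Hy).
  assert (E : w ^ 2 = a * y) by (unfold y; field; lra).
  rewrite E.
  assert (B : Rabs (a * ln (1 + y) - a * y) <= a * (y ^ 2 / 2)).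
  { apply Rabs_le. split; nra. }
  eapply Rle_trans; [exact B|].
  assert (a * (y ^ 2 / 2) = w ^ 4 / 2 * / a) by (unfold y; field; lra).
  rewrite H4. apply Rmult_le_compat_l. nra.
  apply Rinv_le_contravar. nra. nra.
Qed.

Lemma ex_fm w : ex_series (fm w).
Proof. apply (ex_series_sq_bound _ (w ^ 4 / 2)). intro k. apply fm_bound. Qed.

Definition dfm (x : R) (k : nat) : R := - 2 * x ^ 3 / (am k + x ^ 2).

Lemma dfm_bound x k : Rabs (dfm x k) <= 2 * Rabs x ^ 3 * / INR (k + 1) ^ 2.
Proof.
  destruct (am_ge k) as [H1 [H2 H3]]. unfold dfm.
  assert (0 <= x ^ 2) by nra.
  rewrite Rabs_div by (apply Rgt_not_eq; nra). rewrite (Rabs_pos_eq (am k + x ^ 2)) by nra.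
  rewrite Rabs_mult, <- RPow_abs. replace (Rabs (-2)) with 2 by (rewrite Rabs_left; lra).
  unfold Rdiv. apply Rmult_le_compat_l. pose proof (Rabs_pos x); apply Rmult_le_pos; [lra|apply pow_le; auto].
  apply Rinv_le_contravar. nra. nra.
Qed.

Lemma ex_dfm x : ex_series (dfm x).
Proof. apply (ex_series_sq_bound _ (2 * Rabs x ^ 3)). apply dfm_bound. Qed.

Lemma fm_deriv k t : derivable_pt_lim (fun t => fm t k) t (dfm t k).
Proof.
  destruct (am_ge k) as [H1 [H2 H3]].
  apply is_derive_Reals. unfold fm, dfm. auto_derive.
  - assert (0 <= t ^ 2 / am k) by (apply Rdiv_le_0_compat; nra). simpl in *. nra.
  - field. split; apply Rgt_not_eq; nra.
Qed.

Lemma dfm_lip k c x W : Rabs c <= W -> Rabs x <= W ->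
  Rabs (dfm c k - dfm x k) <= 2 * (3 * W ^ 2 + W ^ 4) * / INR (k + 1) ^ 2 * Rabs (c - x).
Proof.
  intros Hc Hx. destruct (am_ge k) as [H1 [H2 H3]].
  set (a := am k) in *. set (m := INR (k + 1)) in *.
  unfold dfm. fold a.
  assert (Hc2 : c ^ 2 <= W ^ 2) by (rewrite <- (Rsqr_pow2 c), <- (Rsqr_pow2 W); apply Rsqr_le_abs_1; rewrite (Rabs_pos_eq W); auto; eapply Rle_trans; [apply Rabs_pos|eauto]).
  assert (Hx2 : x ^ 2 <= W ^ 2) by (rewrite <- (Rsqr_pow2 x), <- (Rsqr_pow2 W); apply Rsqr_le_abs_1; rewrite (Rabs_pos_eq W); auto; eapply Rle_trans; [apply Rabs_pos|eauto]).
  assert (HW : 0 <= W) by (eapply Rle_trans; [apply Rabs_pos|eauto]).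
  assert (Hcx : Rabs (c * x) <= W ^ 2) by (rewrite Rabs_mult; simpl; rewrite Rmult_1_r; apply Rmult_le_compat; auto; apply Rabs_pos).
  assert (Hc0 : 0 <= c ^ 2) by nra. assert (Hx0 : 0 <= x ^ 2) by nra.
  replace (-2 * c ^ 3 / (a + c ^ 2) - -2 * x ^ 3 / (a + x ^ 2))
    with (-2 * (c - x) * (a * (c ^ 2 + c * x + x ^ 2) + c ^ 2 * x ^ 2) / ((a + c ^ 2) * (a + x ^ 2)))
    by (field; split; apply Rgt_not_eq; nra).
  assert (HN : Rabs (a * (c ^ 2 + c * x + x ^ 2) + c ^ 2 * x ^ 2) <= 3 * a * W ^ 2 + W ^ 4).
  { eapply Rle_trans. apply Rabs_triang. rewrite Rabs_mult, (Rabs_pos_eq a) by lra.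
    rewrite (Rabs_pos_eq (c ^ 2 * x ^ 2)) by nra.
    assert (Rabs (c ^ 2 + c * x + x ^ 2) <= 3 * W ^ 2).
    { eapply Rle_trans. apply Rabs_triang. eapply Rle_trans. apply Rplus_le_compat_r. apply Rabs_triang.
      rewrite (Rabs_pos_eq (c ^ 2)), (Rabs_pos_eq (x ^ 2)) by nra. lra. }
    assert (c ^ 2 * x ^ 2 <= W ^ 2 * W ^ 2) by (apply Rmult_le_compat; auto).
    nra. }
  assert (HD : a * a <= (a + c ^ 2) * (a + x ^ 2)) by nra.
  rewrite Rabs_div by (apply Rgt_not_eq; nra).
  rewrite (Rabs_pos_eq ((a + c ^ 2) * (a + x ^ 2))) by nra.
  rewrite !Rabs_mult. replace (Rabs (-2)) with 2 by (rewrite Rabs_left; lra).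
  set (N := Rabs (a * (c ^ 2 + c * x + x ^ 2) + c ^ 2 * x ^ 2)) in *.
  set (d := Rabs (c - x)). assert (Hd : 0 <= d) by apply Rabs_pos.
  assert (HN0 : 0 <= N) by apply Rabs_pos.
  assert (Hm : 0 < m ^ 2) by nra.
  assert (Key : N * m ^ 2 <= (3 * W ^ 2 + W ^ 4) * ((a + c ^ 2) * (a + x ^ 2))).
  { assert (N * m ^ 2 <= (3 * a * W ^ 2 + W ^ 4) * m ^ 2) by (apply Rmult_le_compat_r; lra).
    assert ((3 * a * W ^ 2 + W ^ 4) * m ^ 2 <= (3 * W ^ 2 + W ^ 4) * (a * a)).
    { assert (m ^ 2 <= a) by lra. assert (0 <= W ^ 2) by nra. assert (0 <= W ^ 4) by nra.
      assert (a <= a * a) by nra.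
      assert (3 * a * W ^ 2 * m ^ 2 <= 3 * a * W ^ 2 * a) by (apply Rmult_le_compat_l; nra).
      assert (W ^ 4 * m ^ 2 <= W ^ 4 * (a * a)) by (apply Rmult_le_compat_l; nra).
      nra. }
    assert ((3 * W ^ 2 + W ^ 4) * (a * a) <= (3 * W ^ 2 + W ^ 4) * ((a + c ^ 2) * (a + x ^ 2))).
    { apply Rmult_le_compat_l; [|lra]. assert (0 <= W ^ 2) by nra. assert (0 <= W ^ 4) by nra. lra. }
    lra. }
  apply (Rmult_le_reg_r ((a + c ^ 2) * (a + x ^ 2) * m ^ 2)).
  { apply Rmult_lt_0_compat; [apply Rmult_lt_0_compat|]; lra. }
  unfold Rdiv.
  replace (2 * d * N * / ((a + c ^ 2) * (a + x ^ 2)) * ((a + c ^ 2) * (a + x ^ 2) * m ^ 2)) with (2 * d * (N * m ^ 2)) by (field; split; apply Rgt_not_eq; lra).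
  replace (2 * (3 * W ^ 2 + W ^ 4) * / m ^ 2 * d * ((a + c ^ 2) * (a + x ^ 2) * m ^ 2)) with (2 * d * ((3 * W ^ 2 + W ^ 4) * ((a + c ^ 2) * (a + x ^ 2)))) by (field; lra).
  apply Rmult_le_compat_l; lra.
Qed.

Lemma fm_rem k x y : 0 < x -> Rabs (y - x) < x / 2 ->
  Rabs (fm y k - fm x k - dfm x k * (y - x)) <= 2 * (3 * (2 * x) ^ 2 + (2 * x) ^ 4) * / INR (k + 1) ^ 2 * (y - x) ^ 2.
Proof.
  intros Hx Hy.
  set (phi := fun t => fm t k - fm x k - dfm x k * (t - x)).
  destruct (MVT_abs phi (fun t => dfm t k - dfm x k) x y) as [c [Hc Hcr]].
  { intros c _. unfold phi. apply is_derive_Reals.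
    apply (is_derive_ext (fun t => fm t k - (fm x k + dfm x k * (t - x)))). intro; toR; ring.
    replace (dfm c k - dfm x k) with (dfm c k - dfm x k * 1) by ring.
    apply (is_derive_minus (fun t => fm t k)). apply is_derive_Reals, fm_deriv.
    apply (is_derive_ext (fun t => fm x k + dfm x k * (t - x))). reflexivity.
    auto_derive; auto. }
  assert (Hphix : phi x = 0) by (unfold phi; ring).
  unfold phi in Hc at 1. rewrite Hphix, Rminus_0_r in Hc. rewrite Hc.
  assert (Hyx : Rabs (y - x) * Rabs (y - x) = (y - x) ^ 2) by (rewrite <- (pow2_abs (y - x)); ring).
  assert (Hcx : Rabs (c - x) <= Rabs (y - x)).
  { unfold Rmin, Rmax in Hcr. destruct (Rle_dec x y); unfold Rabs; destruct (Rcase_abs (c - x)); destruct (Rcase_abs (y - x)); lra. }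
  assert (HcW : Rabs c <= 2 * x).
  { assert (Rabs (y - x) < x / 2) by auto. unfold Rmin, Rmax in Hcr. unfold Rabs in *.
    destruct (Rle_dec x y); destruct (Rcase_abs c); destruct (Rcase_abs (y - x)); lra. }
  assert (HxW : Rabs x <= 2 * x) by (rewrite Rabs_pos_eq; lra).
  pose proof (dfm_lip k c x (2 * x) HcW HxW) as L.
  assert (Hpos : 0 <= 2 * (3 * (2 * x) ^ 2 + (2 * x) ^ 4) * / INR (k + 1) ^ 2).
  { destruct (am_ge k) as [_ [H2 _]]. apply Rmult_le_pos. assert (0 <= (2*x)^2) by nra. assert (0 <= (2*x)^4) by nra. lra.
    apply Rlt_le, Rinv_0_lt_compat. nra. }
  rewrite <- Hyx.
  eapply Rle_trans. apply Rmult_le_compat_r. apply Rabs_pos. exact L.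
  rewrite Rmult_assoc. apply Rmult_le_compat_l; auto.
  apply Rmult_le_compat_r; auto. apply Rabs_pos.
Qed.

Lemma SF_deriv w : 0 < w -> derivable_pt_lim (fun y => Series (fm y)) w (Series (dfm w)).
Proof.
  intro Hw.
  apply (series_derive (fun k y => fm y k) (fun k x => dfm x k)
          (fun k => 2 * (3 * (2 * w) ^ 2 + (2 * w) ^ 4) * / INR (k + 1) ^ 2) w (w / 2)).
  - lra.
  - intros y _. apply ex_fm.
  - apply ex_dfm.
  - apply exR_scal, ex_series_inv_sq.
  - intro k. apply Rmult_le_pos. assert (0 <= (2*w)^2) by nra. assert (0 <= (2*w)^4) by nra. lra.
    apply Rlt_le, Rinv_0_lt_compat, pow_lt, INR_Sk_pos.
  - intros k y Hy. apply fm_rem; auto.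
Qed.

Lemma Series_dfm w : 0 < w ->
  Series (dfm w) = - w ^ 2 * ((1 + exp (- (2 * w))) / (1 - exp (- (2 * w))) - 1 / w).
Proof.
  intro Hw. rewrite <- coth_series by auto. rewrite <- Series_scal_l. apply Series_ext. intro k.
  unfold dfm, am. pose proof (INR_Sk_pos k). pose proof PI_RGT_0.
  assert (0 < PI ^ 2 * INR (k + 1) ^ 2) by (apply Rmult_lt_0_compat; apply pow_lt; auto).
  field. repeat split; apply Rgt_not_eq; nra.
Qed.

Lemma Lw_deriv s w : 0 < w ->
  derivable_pt_lim (fun w => Li (S s) (exp (- 2 * w))) w (-2 * Li s (exp (- 2 * w))).
Proof.
  intro Hw.
  set (q := exp (- 2 * w)).
  assert (Hq : 0 < q < 1).
  { unfold q. split. apply exp_pos. rewrite <- exp_0. apply exp_increasing. lra. }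
  replace (-2 * Li s q) with (PSeries (PS_derive (aL (S s))) q * (-2 * q)).
  - apply (derivable_pt_lim_comp (fun w => exp (- 2 * w)) (Li (S s)) w (-2 * q)).
    + apply is_derive_Reals. auto_derive; auto. unfold q. ring.
    + apply Li_derive. rewrite Rabs_pos_eq; lra.
  - rewrite Li_PSeries, <- PS_derive_aL. ring.
Qed.

Definition Gp (w : R) : R :=
  -2 * Series (fm w) + 2 * w * Li 2 (exp (- 2 * w)) + Li 3 (exp (- 2 * w))
  - 2 * w ^ 2 * ln (exp (2 * w) - 1) + (10 * w + 3) * w ^ 2 / 3.

Lemma Gp_deriv w : 0 < w -> derivable_pt_lim Gp w 0.
Proof.
  intro Hw.
  set (SF := fun y => Series (fm y)).
  set (L2 := fun y => Li 2 (exp (- 2 * y))).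
  set (L3 := fun y => Li 3 (exp (- 2 * y))).
  assert (D1 : is_derive SF w (Series (dfm w))) by (apply is_derive_Reals, SF_deriv; auto).
  assert (D2 : is_derive L2 w (-2 * Li 1 (exp (- 2 * w)))) by (apply is_derive_Reals, (Lw_deriv 1); auto).
  assert (D3 : is_derive L3 w (-2 * Li 2 (exp (- 2 * w)))) by (apply is_derive_Reals, (Lw_deriv 2); auto).
  apply is_derive_Reals.
  apply (is_derive_ext (fun y => -2 * SF y + 2 * y * L2 y + L3 y - 2 * y ^ 2 * ln (exp (2 * y) - 1) + (10 * y + 3) * y ^ 2 / 3)).
  { intro t. reflexivity. }
  assert (HE : 1 < exp (2 * w)) by (apply exp2w_gt1; auto).
  auto_derive.
  { repeat split; try (eexists; eassumption). lra. }
  replace (Derive (fun x => SF x) w) with (Series (dfm w)) by (symmetry; apply is_derive_unique; exact D1).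
  replace (Derive (fun x => L2 x) w) with (-2 * Li 1 (exp (- 2 * w))) by (symmetry; apply is_derive_unique; exact D2).
  replace (Derive (fun x => L3 x) w) with (-2 * Li 2 (exp (- 2 * w))) by (symmetry; apply is_derive_unique; exact D3).
  unfold L2.
  rewrite Series_dfm by auto.
  replace (- (2 * w)) with (-2 * w) by ring.
  assert (Hq : exp (-2 * w) = / exp (2 * w)) by (rewrite <- exp_Ropp; f_equal; ring).
  assert (Hq1 : 0 <= exp (-2 * w) < 1).
  { rewrite Hq. split. apply Rlt_le, Rinv_0_lt_compat; lra. rewrite <- Rinv_1. apply Rinv_lt_contravar; lra. }
  rewrite (Li1_ln _ Hq1).
  assert (HL : ln (exp (2 * w) + - (1)) = 2 * w + ln (1 - exp (-2 * w))).
  { rewrite <- (ln_exp (2 * w)) at 2. rewrite <- ln_mult. f_equal. rewrite Hq. field. lra.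
    apply exp_pos. lra. }
  rewrite HL.
  generalize (ln (1 - exp (-2 * w))) (Li 2 (exp (-2 * w))). intros l2 li2.
  assert (HiE : / exp (2 * w) < 1) by (rewrite <- Rinv_1; apply Rinv_lt_contravar; lra).
  rewrite Hq. field. repeat split; apply Rgt_not_eq; lra.
Qed.

Lemma Gp_const v w : 0 < v -> 0 < w -> Gp v = Gp w.
Proof.
  intros Hv Hw.
  destruct (Rtotal_order v w) as [Hlt|[Heq|Hgt]].
  - destruct (MVT_cor2 Gp (fun _ => 0) v w Hlt) as [c [Hc _]].
    intros c Hc. apply Gp_deriv. lra. lra.
  - subst; auto.
  - destruct (MVT_cor2 Gp (fun _ => 0) w v Hgt) as [c [Hc _]].
    intros c Hc. apply Gp_deriv. lra. lra.
Qed.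

Lemma pow_le1 (x : R) (n : nat) : 0 <= x <= 1 -> x ^ n <= 1.
Proof.
  intro H. induction n as [|n IH]. simpl; lra.
  simpl. assert (0 <= x ^ n) by (apply pow_le; lra). nra.
Qed.

Lemma bernoulli_q (q : R) (n : nat) : 0 <= q <= 1 -> 0 <= 1 - q ^ n <= INR n * (1 - q).
Proof.
  intro Hq. induction n as [|n IH].
  - simpl. lra.
  - rewrite S_INR. simpl pow.
    assert (0 <= q ^ n <= 1) by (split; [apply pow_le; lra| apply pow_le1; lra]).
    split; nra.
Qed.

Lemma ln_lower y : 0 < y -> 1 - / y <= ln y.
Proof.
  intro Hy. pose proof (exp_ineq1_le (ln (/ y))). rewrite exp_ln in H by (apply Rinv_0_lt_compat; auto).
  rewrite ln_Rinv in H by auto. lra.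
Qed.

Lemma Li_abs_le s z : (2 <= s)%nat -> Rabs z <= 1 -> Rabs (Li s z) <= 2.
Proof.
  intros Hs Hz. unfold Li.
  apply Rle_trans with (2 * 1); [|lra].
  apply Series_sq_bound; [|lra]. intro k.
  pose proof (INR_Sk_pos k). set (m := INR (k + 1)) in *.
  assert (1 <= m) by (unfold m; rewrite plus_INR; simpl; pose proof (pos_INR k); lra).
  rewrite Rabs_div by (apply Rgt_not_eq, pow_lt; auto).
  rewrite <- RPow_abs. rewrite (Rabs_pos_eq (m ^ s)) by (apply pow_le; lra).
  assert (Rabs z ^ (k + 1) <= 1) by (apply pow_le1; split; [apply Rabs_pos|auto]).
  assert (m ^ 2 <= m ^ s) by (apply Rle_pow; auto; lia).
  assert (0 < m ^ 2) by (apply pow_lt; lra).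
  rewrite Rmult_1_l. unfold Rdiv.
  apply Rle_trans with (1 * / m ^ s). apply Rmult_le_compat_r; [apply Rlt_le, Rinv_0_lt_compat; lra|auto].
  rewrite Rmult_1_l. apply Rinv_le_contravar; auto.
Qed.

Lemma Gp_near v : 0 < v -> v <= 1 / 2 -> Rabs (Gp v - zeta3) <= 20 * v.
Proof.
  intros Hv Hv2.
  set (q := exp (- 2 * v)).
  assert (Hq : 0 < q <= 1).
  { unfold q. split. apply exp_pos. rewrite <- exp_0. destruct (Req_dec v 0); [lra|]. left; apply exp_increasing; lra. }
  assert (Hq2 : 1 - q <= 2 * v) by (unfold q; pose proof (exp_ineq1_le (-2 * v)); lra).
  assert (Ha : Rabs (-2 * Series (fm v)) <= 2 * v).
  { rewrite Rabs_mult. replace (Rabs (-2)) with 2 by (rewrite Rabs_left; lra).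
    assert (Rabs (Series (fm v)) <= 2 * (v ^ 4 / 2)) by (apply Series_sq_bound; [apply fm_bound|nra]).
    assert (v ^ 4 <= v) by (assert (v^2 <= 1) by nra; assert (v^3 <= 1) by nra; nra). lra. }
  assert (Hb : Rabs (2 * v * Li 2 q) <= 4 * v).
  { rewrite Rabs_mult, Rabs_pos_eq by lra. assert (Rabs (Li 2 q) <= 2) by (apply Li_abs_le; auto; rewrite Rabs_pos_eq; lra). nra. }
  assert (Hc : Rabs (Li 3 q - zeta3) <= 4 * v).
  { unfold Li, zeta3.
    assert (E1 : ex_series (fun k => q ^ (k + 1) / INR (k + 1) ^ 3)).
    { apply (ex_series_sq_bound _ 1). intro k. pose proof (INR_Sk_pos k). set (m := INR (k + 1)) in *.
      assert (1 <= m) by (unfold m; rewrite plus_INR; simpl; pose proof (pos_INR k); lra).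
      rewrite Rabs_div by (apply Rgt_not_eq, pow_lt; auto). rewrite (Rabs_pos_eq (m ^ 3)) by (apply pow_le; lra).
      rewrite Rabs_pos_eq by (apply pow_le; lra).
      assert (q ^ (k + 1) <= 1) by (apply pow_le1; lra). assert (m ^ 2 <= m ^ 3) by (apply Rle_pow; auto; lia).
      assert (0 < m ^ 2) by (apply pow_lt; lra).
      unfold Rdiv. rewrite Rmult_1_l. apply Rle_trans with (1 * / m ^ 3).
      apply Rmult_le_compat_r; [apply Rlt_le, Rinv_0_lt_compat; nra|auto].
      rewrite Rmult_1_l. apply Rinv_le_contravar; auto. }
    assert (E2 : ex_series (fun k => / INR (k + 1) ^ 3)).
    { apply (ex_series_sq_bound _ 1). intro k. pose proof (INR_Sk_pos k). set (m := INR (k + 1)) in *.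
      assert (1 <= m) by (unfold m; rewrite plus_INR; simpl; pose proof (pos_INR k); lra).
      rewrite Rabs_pos_eq by (apply Rlt_le, Rinv_0_lt_compat, pow_lt; lra).
      assert (m ^ 2 <= m ^ 3) by (apply Rle_pow; auto; lia). assert (0 < m ^ 2) by (apply pow_lt; lra).
      rewrite Rmult_1_l. apply Rinv_le_contravar; auto. }
    rewrite <- Series_minus by auto.
    apply Rle_trans with (2 * (2 * v)); [|lra].
    apply Series_sq_bound; [|lra]. intro k.
    pose proof (INR_Sk_pos k). set (m := INR (k + 1)) in *.
    assert (1 <= m) by (unfold m; rewrite plus_INR; simpl; pose proof (pos_INR k); lra).
    destruct (bernoulli_q q (k + 1) ltac:(lra)) as [B1 B2]. fold m in B2.
    replace (q ^ (k + 1) / m ^ 3 - / m ^ 3) with (- ((1 - q ^ (k + 1)) / m ^ 3)) by (field; lra).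
    rewrite Rabs_Ropp, Rabs_pos_eq by (apply Rdiv_le_0_compat; [lra|apply pow_lt; lra]).
    assert (0 < m ^ 2) by (apply pow_lt; lra).
    replace (2 * v * / m ^ 2) with ((2 * v * m) / m ^ 3) by (field; lra).
    unfold Rdiv. apply Rmult_le_compat_r. apply Rlt_le, Rinv_0_lt_compat, pow_lt; lra.
    nra. }
  assert (Hd : Rabs (2 * v ^ 2 * ln (exp (2 * v) - 1)) <= 4 * v ^ 3 + v).
  { pose proof (exp_ineq1_le (2 * v)).
    assert (Hup : ln (exp (2 * v) - 1) <= 2 * v).
    { rewrite <- (ln_exp (2 * v)) at 2. apply ln_le; lra. }
    assert (Hlo : 1 - / (2 * v) <= ln (exp (2 * v) - 1)).
    { apply Rle_trans with (ln (2 * v)). apply ln_lower; lra. apply ln_le; lra. }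
    assert (Rabs (ln (exp (2 * v) - 1)) <= 2 * v + / (2 * v)).
    { apply Rabs_le. assert (0 < / (2 * v)) by (apply Rinv_0_lt_compat; lra). split; lra. }
    rewrite Rabs_mult, Rabs_pos_eq by nra.
    apply Rle_trans with (2 * v ^ 2 * (2 * v + / (2 * v))). apply Rmult_le_compat_l; [nra|auto].
    right. field. lra. }
  assert (He : 0 <= (10 * v + 3) * v ^ 2 / 3 <= 3 * v) by (split; nra).
  unfold Gp. fold q.
  replace (-2 * Series (fm v) + 2 * v * Li 2 q + Li 3 q - 2 * v ^ 2 * ln (exp (2 * v) - 1) + (10 * v + 3) * v ^ 2 / 3 - zeta3)
    with (-2 * Series (fm v) + 2 * v * Li 2 q + (Li 3 q - zeta3) - 2 * v ^ 2 * ln (exp (2 * v) - 1) + (10 * v + 3) * v ^ 2 / 3) by ring.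
  set (A := -2 * Series (fm v)) in *. set (B := 2 * v * Li 2 q) in *. set (C := Li 3 q - zeta3) in *.
  set (D := 2 * v ^ 2 * ln (exp (2 * v) - 1)) in *. set (F := (10 * v + 3) * v ^ 2 / 3) in *.
  assert (v ^ 3 <= v / 4) by nra.
  unfold Rabs in *. destruct (Rcase_abs A), (Rcase_abs B), (Rcase_abs C), (Rcase_abs D), (Rcase_abs (A + B + C - D + F)); lra.
Qed.

Lemma Gp_zeta w : 0 < w -> Gp w = zeta3.
Proof.
  intro Hw. destruct (Req_dec (Gp w) zeta3) as [|Hne]; auto. exfalso.
  set (e := Rabs (Gp w - zeta3)). assert (He : 0 < e) by (apply Rabs_pos_lt; lra).
  set (v := Rmin (1 / 2) (e / 40)).
  assert (Hv : 0 < v) by (apply Rmin_pos; lra).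
  assert (Hv1 : v <= 1 / 2) by apply Rmin_l. assert (Hv2 : v <= e / 40) by apply Rmin_r.
  pose proof (Gp_near v Hv Hv1). rewrite (Gp_const v w Hv Hw) in H. fold e in H. lra.
Qed.

Theorem mainTheorem18 (w : R) (hw : 0 < w) :
  ex_series (term18 w) /\
  zeta3 =
    - 2 * w ^ 2 * Series (term18 w)
    + 2 * w * Li 2 (exp (- 2 * w))
    + Li 3 (exp (- 2 * w))
    - 2 * w ^ 2 * ln (exp (2 * w) - 1)
    + (10 * w + 3) * w ^ 2 / 3.
Proof.
  assert (Ht : forall k, term18 w k = / w ^ 2 * fm w k).
  { intro k. unfold term18, fm, am. cbv zeta. field. nra. }
  split.
  - apply (exR_ext (fun k => / w ^ 2 * fm w k)). intro k; rewrite Ht; auto.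
    apply exR_scal, ex_fm.
  - rewrite (Series_ext _ _ Ht). rewrite Series_scal_l.
    rewrite <- (Gp_zeta w hw). unfold Gp. field. nra.
Qed.
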